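(* For every even integer $T\ge 6$ and every $\sigma\in\mathfrak S_3$, the vector $\sigma c$ with $c=[\tfrac32T-1,\ \tfrac T2,\ -\tfrac T2+1,\ -\tfrac T2+1,\ -\tfrac T2+1,\ \tfrac T2]$ defines a facet of $P^T$.
   Context: For an integer $T\ge 2$, let $\Omega_T$ be the set of words $w=s_1s_2\cdots s_T$ over $\{1,2,3\}$ with $s_l\neq s_{l+1}$ for $l=1,\dots,T-1$. For $w\in\Omega_T$ and an ordered pair $ij$, $i\neq j$, let $x_{ij}(w)$ be the number of indices $1\le l\le T-1$ with $s_ls_{l+1}=ij$. Vectors of $\mathbb R^6$ are indexed in the order $[x_{12},x_{13},x_{21},x_{23},x_{31},x_{32}]$. Let $a_w=[x_{12}(w),\dots,x_{32}(w)]$ and $P^T=\mathrm{conv}\{a_w:w\in\Omega_T\}$. $\mathfrak S_3$ acts on $\mathbb R^6$ by $(\sigma c)_{ij}=c_{\sigma(i)\sigma(j)}$. A vector $c$ defines a facet of $P^T$ if $c\cdot a_w\ge0$ for all $w\in\Omega_T$ and $\{x\in P^T: c\cdot x=0\}$ is a facet of $P^T$. *)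

(* Defs.v *)
From HB Require Import structures.
From mathcomp Require Import all_boot all_order all_algebra all_fingroup.
Set Implicit Arguments. Unset Strict Implicit. Unset Printing Implicit Defensive.
Import Order.TTheory GRing.Theory Num.Theory.
Local Open Scope ring_scope.

(* Letters 1,2,3 are encoded as the elements 0,1,2 of 'I_3. *)
Definition L1 : 'I_3 := @Ordinal 3 0 isT.
Definition L2 : 'I_3 := @Ordinal 3 1 isT.
Definition L3 : 'I_3 := @Ordinal 3 2 isT.

(* Coordinate order [x12,x13,x21,x23,x31,x32]. *)
Definition pairs : seq ('I_3 * 'I_3) :=
  [:: (L1, L2); (L1, L3); (L2, L1); (L2, L3); (L3, L1); (L3, L2)].

Definition pr (k : 'I_6) : 'I_3 * 'I_3 := nth (L1, L1) pairs k.

Definition pidx (i j : 'I_3) : 'I_6 := inord (index (i, j) pairs).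

Definition Omega (T : nat) (w : T.-tuple 'I_3) : bool :=
  [forall l : 'I_T.-1, nth L1 w l != nth L1 w l.+1].

Definition xcount (T : nat) (w : T.-tuple 'I_3) (i j : 'I_3) : nat :=
  (\sum_(l < T.-1) ((nth L1 w l == i) && (nth L1 w l.+1 == j)))%N.

Definition avec (R : pzRingType) (T : nat) (w : T.-tuple 'I_3) : 'rV[R]_6 :=
  \row_k (xcount w (pr k).1 (pr k).2)%:R.

Definition PT (R : realFieldType) (T : nat) : 'rV[R]_6 -> Prop :=
  fun x => exists lam : T.-tuple 'I_3 -> R,
    [/\ forall w, 0 <= lam w,
        forall w, ~~ Omega w -> lam w = 0,
        \sum_w lam w = 1 &
        x = \sum_w lam w *: avec R w].

Definition dotv (R : pzRingType) (c x : 'rV[R]_6) : R := \sum_k c 0 k * x 0 k.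

Definition sact (R : pzRingType) (s : {perm 'I_3}) (c : 'rV[R]_6) : 'rV[R]_6 :=
  \row_k c 0 (pidx (s (pr k).1) (s (pr k).2)).

Definition affindep (R : fieldType) (k : nat) (p : 'I_k.+1 -> 'rV[R]_6) : bool :=
  row_free (\matrix_(i < k) (p (lift ord0 i) - p ord0)).

Definition affdim_ge (R : fieldType) (X : 'rV[R]_6 -> Prop) (k : nat) : Prop :=
  exists p : 'I_k.+1 -> 'rV[R]_6, (forall i, X (p i)) /\ affindep p.

Definition has_affdim (R : fieldType) (X : 'rV[R]_6 -> Prop) (d : nat) : Prop :=
  affdim_ge X d /\ ~ affdim_ge X d.+1.

Definition defines_facet (R : realFieldType) (T : nat) (c : 'rV[R]_6) : Prop :=
  (forall w : T.-tuple 'I_3, Omega w -> 0 <= dotv c (avec R w)) /\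
  exists d : nat,
    has_affdim (@PT R T) d.+1 /\
    has_affdim (fun x => PT T x /\ dotv c x = 0) d.

Definition cvec (R : realFieldType) (T : nat) : 'rV[R]_6 :=
  let t := T%:R : R in
  \row_k nth 0 [:: 3 * t / 2 - 1; t / 2; - (t / 2) + 1; - (t / 2) + 1;
                  - (t / 2) + 1; t / 2] k.

(* Main.v *)
Require Import Defs.
From HB Require Import structures.
From mathcomp Require Import all_boot all_order all_algebra all_fingroup.
From mathcomp Require Import ring lra zify.
Import Order.TTheory GRing.Theory Num.Theory.
Local Open Scope ring_scope.
Set Implicit Arguments. Unset Strict Implicit.

Lemma pr_pidx (i j : 'I_3) : i != j -> pr (pidx i j) = (i, j).
Proof.
case: i => [[|[|[|i]]] Hi] //; case: j => [[|[|[|j]]] Hj] //= _;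
  rewrite /pr /pidx /=; apply/eqP; rewrite /= ?inordK //; by apply/andP; split; apply/eqP/val_inj.
Qed.

Lemma pr_neq (k : 'I_6) : (pr k).1 != (pr k).2.
Proof. by case: k => [[|[|[|[|[|[|k]]]]]] Hk]. Qed.

Lemma pidx_pr (k : 'I_6) : pidx (pr k).1 (pr k).2 = k.
Proof. case: k => [[|[|[|[|[|[|k]]]]]] Hk] //; apply/val_inj; by rewrite /= inordK. Qed.

Definition Q (s : {perm 'I_3}) (k : 'I_6) : 'I_6 := pidx (s (pr k).1) (s (pr k).2).

Lemma pr_Q s k : pr (Q s k) = (s (pr k).1, s (pr k).2).
Proof. by rewrite /Q pr_pidx // (inj_eq perm_inj) pr_neq. Qed.

Lemma QK s k : Q (s^-1)%g (Q s k) = k.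
Proof. by rewrite {1}/Q pr_Q /= !permK pidx_pr. Qed.

Lemma Q_inj s : injective (Q s).
Proof. exact: can_inj (@QK s). Qed.

Section G.
Variable R : realFieldType.

Definition gm (s : {perm 'I_3}) : 'M[R]_6 := \matrix_(i, j) (i == Q (s^-1)%g j)%:R.

Lemma gmE m s (A : 'M[R]_(m, 6)) i k : (A *m gm s) i k = A i (Q (s^-1)%g k).
Proof.
rewrite !mxE (bigD1 (Q (s^-1)%g k)) //= !mxE eqxx mulr1 big1 ?addr0 // => j /negbTE Hj.
by rewrite !mxE Hj mulr0.
Qed.

Lemma gmK m s (A : 'M[R]_(m, 6)) : A *m gm s *m gm (s^-1)%g = A.
Proof. by apply/matrixP => i k; rewrite !gmE invgK QK. Qed.

Definition xmap T (s : {perm 'I_3}) (w : T.-tuple 'I_3) : T.-tuple 'I_3 := map_tuple s w.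

Lemma xcount_map T s (w : T.-tuple 'I_3) a b :
  xcount (xmap s w) a b = xcount w ((s^-1)%g a) ((s^-1)%g b).
Proof.
apply: eq_bigr => l _.
have Hl : (l < T)%N by case: T w l => [|T'] w [l Hl] //=; lia.
have Hl1 : (l.+1 < T)%N by case: T w l {Hl} => [|T'] w [l Hl] //=; lia.
rewrite /xmap /= -[L1](permKV s) !(nth_map ((s^-1)%g L1)) ?size_tuple // !permKV.
have E : forall u v, (s u == v) = (u == (s^-1)%g v).
  by move=> u v; apply/eqP/eqP => [<-|->]; rewrite ?permK ?permKV.
rewrite !E.
by rewrite !(set_nth_default L1) ?size_tuple.
Qed.

Lemma avec_map T s (w : T.-tuple 'I_3) : avec R (xmap s w) = avec R w *m gm s.
Proof. by apply/rowP => k; rewrite gmE !mxE pr_Q xcount_map. Qed.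

Lemma dot_gm s c x : dotv c (x *m gm s) = dotv (sact s c) x.
Proof.
rewrite /dotv (reindex_inj (@Q_inj s)) /=; apply: eq_bigr => k _.
by rewrite gmE QK !mxE.
Qed.

Lemma nth_xmap T s (w : T.-tuple 'I_3) i : (i < T)%N ->
  nth L1 (xmap s w) i = s (nth L1 w i).
Proof.
move=> Hi; rewrite /xmap /= -[L1](permKV s) (nth_map ((s^-1)%g L1)) ?size_tuple //.
by rewrite permKV (set_nth_default L1) ?size_tuple.
Qed.

Lemma Omega_map T s (w : T.-tuple 'I_3) : Omega (xmap s w) = Omega w.
Proof.
have HT : forall l : 'I_T.-1, (l < T)%N /\ (l.+1 < T)%N.
  by case: T w => [|T'] w [l Hl] //=; lia.
apply/forallP/forallP => H l; have := H l; case: (HT l) => Hl Hl1;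
  rewrite !nth_xmap //.
  by apply: contra_neq => ->.
by apply: contra_neq => /perm_inj.
Qed.
Lemma xmapK T s (w : T.-tuple 'I_3) : xmap (s^-1)%g (xmap s w) = w.
Proof. by apply: val_inj; rewrite /= -map_comp (eq_map (permK s)) map_id. Qed.

Lemma xmap_inj T s : injective (@xmap T s).
Proof. exact: can_inj (@xmapK T s). Qed.

Lemma PT_g T s x : PT T x -> PT T (x *m gm s).
Proof.
case=> lam [H0 H1 H2 ->]; exists (fun w => lam (xmap (s^-1)%g w)); split.
- by move=> w; apply: H0.
- by move=> w Hw; apply: H1; rewrite Omega_map.
- rewrite (reindex_inj (@xmap_inj T s)) -H2; by apply: eq_bigr => w _; rewrite (xmapK s w).
rewrite mulmx_suml [RHS](reindex_inj (@xmap_inj T s)) /=; apply: eq_bigr => w _.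
by rewrite (xmapK s w) -scalemxAl avec_map.
Qed.

Lemma affindep_g k s (p : 'I_k.+1 -> 'rV[R]_6) :
  affindep p -> affindep (fun i => p i *m gm s).
Proof.
rewrite /affindep /row_free => /eqP HD.
set D := \matrix_(i < k) _ in HD.
have -> : \matrix_(i < k) (p (lift ord0 i) *m gm s - p ord0 *m gm s) = D *m gm s.
  apply/matrixP => i j; rewrite gmE !mxE; congr (_ - _); [have := gmE s (p (lift ord0 i)) 0 j | have := gmE s (p ord0) 0 j]; by rewrite mxE.
rewrite eqn_leq rank_leq_row /= -{1}HD.
by rewrite -{1}[D](gmK s) mxrankM_maxl.
Qed.

Lemma gmK' m s (A : 'M[R]_(m, 6)) : A *m gm (s^-1)%g *m gm s = A.
Proof. by have := gmK (s^-1)%g A; rewrite invgK. Qed.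

Lemma transfer T (c : 'rV[R]_6) s : defines_facet T c -> defines_facet T (sact s c).
Proof.
case=> Hineq [d [HP [[p [Hp Hpi]] Hn]]]; split.
  move=> w Hw; rewrite -dot_gm -avec_map; apply: Hineq; by rewrite Omega_map.
exists d; split => //; split.
  exists (fun i => p i *m gm (s^-1)%g); split; last exact: affindep_g.
  move=> i; case: (Hp i) => HPi Hci; split; first exact: PT_g.
  by rewrite -dot_gm gmK'.
case=> q [Hq Hqi]; apply: Hn; exists (fun i => q i *m gm s); split; last exact: affindep_g.
move=> i; case: (Hq i) => HPi Hci; split; first exact: PT_g.
by rewrite dot_gm.
Qed.
End G.

Definition o0 : 'I_6 := @Ordinal 6 0 isT.
Definition o1 : 'I_6 := @Ordinal 6 1 isT.
Definition o2 : 'I_6 := @Ordinal 6 2 isT.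
Definition o3 : 'I_6 := @Ordinal 6 3 isT.
Definition o4 : 'I_6 := @Ordinal 6 4 isT.
Definition o5 : 'I_6 := @Ordinal 6 5 isT.

Lemma big6 (R : nmodType) (F : 'I_6 -> R) :
  \sum_k F k = F o0 + F o1 + F o2 + F o3 + F o4 + F o5.
Proof.
rewrite !big_ord_recr big_ord0 /= add0r.
by repeat congr (_ + _); congr F; apply: val_inj.
Qed.

Section Cnt.
Variable R : realFieldType.

Definition ev (x y : 'I_3) : 'rV[R]_6 := \row_k ((x == (pr k).1) && (y == (pr k).2))%:R.

Fixpoint cntv (s : seq 'I_3) : 'rV[R]_6 :=
  match s with x :: ((y :: _) as t) => ev x y + cntv t | _ => 0 end.

Lemma cntv_nth s k : cntv s 0 k =
  (\sum_(l < (size s).-1) ((nth L1 s l == (pr k).1) && (nth L1 s l.+1 == (pr k).2)))%:R.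
Proof.
elim: s => [|x t IH]; first by rewrite big_ord0 mxE.
case: t IH => [|y t'] IH; first by rewrite big_ord0 mxE.
rewrite /= mxE IH big_ord_recl natrD /= !mxE.
by rewrite (eq_sym x) (eq_sym y).
Qed.

Lemma avec_cntv T (w : T.-tuple 'I_3) : avec R w = cntv w.
Proof. by apply/rowP => k; rewrite cntv_nth !mxE size_tuple. Qed.

Definition neq3 := fun a b : 'I_3 => a != b.

Lemma Omega_path T (w : T.-tuple 'I_3) x t : tval w = x :: t ->
  Omega w = path neq3 x t.
Proof.
move=> Ew; have HT : T.-1 = size t by rewrite -(size_tuple w) Ew.
apply/forallP/(pathP L1) => H l.
  move=> Hl; have Hl2 : (l < T.-1)%N by rewrite HT.
  have := H (Ordinal Hl2).
  by rewrite Ew.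
have := H l; rewrite -HT ltn_ord => /(_ isT); by rewrite Ew.
Qed.

Definition psi (x : 'I_3) : nat := nth 0%N [:: 0; 2; 1]%N x.
Definition Wv (v : 'rV[R]_6) := 2 * v 0 o0 + v 0 o1 + v 0 o5.
Definition Sv (v : 'rV[R]_6) := \sum_k v 0 k.

Lemma step x y : x != y -> ((1 + psi y)%:R : R) <= 2 * Wv (ev x y) + (psi x)%:R.
Proof.
case: x => [[|[|[|x]]] Hx] //; case: y => [[|[|[|y]]] Hy] //= _;
  rewrite /Wv /psi !mxE /=; lra.
Qed.

Lemma stepS x y : x != y -> Sv (ev x y) = 1.
Proof.
case: x => [[|[|[|x]]] Hx] //; case: y => [[|[|[|y]]] Hy] //= _;
  rewrite /Sv !big_ord_recr big_ord0 /= !mxE /=; lra.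
Qed.

Lemma pot x t : path neq3 x t ->
  ((size t + psi (last x t))%:R : R) <= 2 * Wv (cntv (x :: t)) + (psi x)%:R.
Proof.
elim: t x => [|y t IH] x /=.
  by move=> _; rewrite /Wv !mxE; lra.
case/andP => Hxy Hp; have := IH y Hp; have := step Hxy.
have -> : Wv (ev x y + cntv (y :: t)) = Wv (ev x y) + Wv (cntv (y :: t)).
  by rewrite /Wv !mxE; ring.
rewrite !natrD; lra.
Qed.

Lemma sumS x t : path neq3 x t -> Sv (cntv (x :: t)) = (size t)%:R.
Proof.
elim: t x => [|y t IH] x /=.
  by move=> _; rewrite /Sv big1 // => k _; rewrite mxE.
case/andP => Hxy Hp; rewrite /Sv (eq_bigr (fun k => ev x y 0 k + cntv (y :: t) 0 k));
  last by move=> k _; rewrite mxE.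
by rewrite big_split /= -/(Sv _) -/(Sv _) IH // stepS // nat1r.
Qed.
End Cnt.

Section Main.
Variable R : realFieldType.

Lemma cvec_o n : let c := cvec R (n * 2) in
  c 0 o0 = 3 * n%:R - 1 /\ c 0 o1 = n%:R /\ c 0 o2 = 1 - n%:R /\
      c 0 o3 = 1 - n%:R /\ c 0 o4 = 1 - n%:R /\ c 0 o5 = n%:R.
Proof. rewrite /= !mxE /= natrM; repeat split; lra. Qed.

Lemma dot_c n (v : 'rV[R]_6) : dotv (cvec R (n * 2)) v =
  (n%:R * 2 - 1) * (Wv v - (n%:R - 1)) + (1 - n%:R) * (Sv v - (n%:R * 2 - 1)).
Proof.
have [H0 [H1 [H2 [H3 [H4 H5]]]]] := cvec_o n.
rewrite /dotv /Wv /Sv !big6 H0 H1 H2 H3 H4 H5; ring.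
Qed.

Lemma tuple_cons T (w : T.-tuple 'I_3) : (0 < T)%N ->
  exists x t, tval w = x :: t /\ size t = T.-1.
Proof.
case: w => [[|x t] /= Hs] HT; first by move: Hs HT => /eqP <-.
by exists x, t; split => //; move/eqP: Hs => <-.
Qed.

Lemma Sv_avec T (w : T.-tuple 'I_3) : (0 < T)%N -> Omega w ->
  Sv (avec R w) = (T.-1)%:R.
Proof.
move=> HT; have [x [t [Ew Hs]]] := tuple_cons w HT.
rewrite (Omega_path Ew) avec_cntv Ew => Hp; by rewrite sumS // Hs.
Qed.

Lemma Wv_nat T (w : T.-tuple 'I_3) :
  Wv (avec R w) = (2 * xcount w L1 L2 + xcount w L1 L3 + xcount w L3 L2)%:R.
Proof. rewrite /Wv !mxE !natrD addr0 /=; ring. Qed.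

Lemma ineq_id n (w : (n * 2).-tuple 'I_3) : (1 <= n)%N -> Omega w ->
  0 <= dotv (cvec R (n * 2)) (avec R w).
Proof.
move=> Hn HO; have HT : (0 < n * 2)%N by lia.
rewrite dot_c Sv_avec //.
have -> : ((n * 2).-1)%:R = n%:R * 2 - 1 :> R.
  by rewrite -subn1 natrB ?natrM //; lia.
rewrite subrr mulr0 addr0.
have [x [t [Ew Hs]]] := tuple_cons w HT.
have Hp : path neq3 x t by rewrite -(Omega_path Ew).
have := pot R Hp; rewrite -Ew -avec_cntv Wv_nat.
set N := (2 * _ + _ + _)%N => H.
have Hpsi : forall y, (psi y <= 2)%N by case=> [[|[|[|y]]] Hy].
have HN : (n - 1 <= N)%N.
  move: H; rewrite -natrM -!natrD ler_nat Hs.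
  have := Hpsi x; have := Hpsi (last x t); lia.
have HNR : (n%:R - 1 : R) <= N%:R.
  by rewrite -(subnK Hn) natrD addrK ler_nat; lia.
have Hn1 : (1 : R) <= n%:R by rewrite (ler_nat R 1 n).
apply: mulr_ge0; lra.
Qed.
Lemma affdim_bound k r (X : 'rV[R]_6 -> Prop) (B : 'M[R]_(6, r)) (beta : 'rV[R]_r) :
  (forall x, X x -> x *m B = beta) -> affdim_ge X k -> (k + \rank B <= 6)%N.
Proof.
move=> HX [p [Hp /eqP HD]]; rewrite -HD; apply: mulmx0_rank_max.
apply/row_matrixP => i; rewrite row_mul rowK row0 mulmxBl !HX //; exact: subrr.
Qed.

Lemma Sv_PT T (x : 'rV[R]_6) : (0 < T)%N -> PT T x -> Sv x = (T.-1)%:R.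
Proof.
move=> HT [lam [H0 H1 H2 ->]].
rewrite /Sv (eq_bigr (fun k => \sum_w lam w * avec R w 0 k)); last first.
  by move=> k _; rewrite summxE; apply: eq_bigr => w _; rewrite mxE.
rewrite exchange_big /=.
transitivity (\sum_w lam w * (T.-1)%:R); last by rewrite -mulr_suml H2 mul1r.
apply: eq_bigr => w _; rewrite -mulr_sumr -/(Sv _).
have [Hw|Hw] := boolP (Omega w); first by rewrite Sv_avec.
by rewrite H1 // !mul0r.
Qed.
Lemma not_PT6 T : (0 < T)%N -> ~ affdim_ge (@PT R T) 6.
Proof.
move=> HT /(affdim_bound (B := const_mx (1 : R) : 'M[R]_(6, 1)) (beta := const_mx (T.-1)%:R)) H.
have : (\rank (const_mx (1%R : R) : 'M[R]_(6, 1)) <= 0)%N.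
  suff : (6 + \rank (const_mx (1%R : R) : 'M[R]_(6, 1)) <= 6)%N by lia.
  apply: H => x Hx; apply/rowP => j; rewrite !mxE -(Sv_PT HT Hx).
  by apply: eq_bigr => k _; rewrite mxE mulr1.
rewrite leqn0 mxrank_eq0 => /eqP/matrixP/(_ 0 0); rewrite !mxE => /eqP.
by rewrite oner_eq0.
Qed.

Lemma not_face5 n : (1 <= n)%N ->
  ~ affdim_ge (fun x => PT (n * 2) x /\ dotv (cvec R (n * 2)) x = 0) 5.
Proof.
move=> Hn; set c := cvec R (n * 2).
pose B2 : 'M[R]_(6, 2) := \matrix_(k, j) if val j == 0%N then 1 else c 0 k.
move/(affdim_bound (B := B2) (beta := \row_j (if val j == 0%N then ((n * 2).-1)%:R else 0))) => H.
suff HB : (2 <= \rank B2)%N.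
  suff : (5 + \rank B2 <= 6)%N by lia.
  apply: H => x [Hx Hc]; apply/rowP => j; rewrite !mxE.
  case: j => [[|[|j]] Hj] //=.
    rewrite -(Sv_PT _ Hx); last by lia.
    by apply: eq_bigr => k _; rewrite mxE mulr1.
  transitivity (dotv c x); last exact: Hc.
  apply: eq_bigr => k _; by rewrite mxE mulrC.
have Hd : (1 - n%:R * 2 : R) != 0.
  have : (1 : R) <= n%:R by rewrite (ler_nat R 1 n).
  move=> H1; apply/eqP => H0; lra.
pose C2 : 'M[R]_(2, 6) := \matrix_(i, k) nth 0 (nth [::] [:: [:: 0; (1 - n%:R) / (1 - n%:R * 2);
   - n%:R / (1 - n%:R * 2); 0; 0; 0]; [:: 0; -1 / (1 - n%:R * 2); 1 / (1 - n%:R * 2); 0; 0; 0]] i) k.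
have : (C2 *m B2 = 1%:M).
  have [H0 [H1 [H2 [H3 [H4 H5]]]]] := cvec_o n.
  apply/matrixP => i j; rewrite !mxE big6 !mxE.
  case: i => [[|[|i]] Hi] //; case: j => [[|[|j]] Hj] //=; 
    rewrite ?H1 ?H2 /=; field => //.
move=> HC; have := mxrankM_maxr C2 B2; by rewrite HC mxrank1.
Qed.
Fixpoint alt (a b : 'I_3) k : seq 'I_3 :=
  if k is k'.+1 then a :: b :: alt a b k' else [::].

Lemma size_alt a b k : size (alt a b k) = (k * 2)%N.
Proof. by elim: k => //= k ->; rewrite mulSn. Qed.

Lemma cntv_alt a b k : cntv R (alt a b k.+1) = k.+1%:R *: ev R a b + k%:R *: ev R b a.
Proof.
elim: k => [|k IH]; first by apply/rowP => j; rewrite !mxE /=; ring.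
rewrite (_ : cntv R (alt a b k.+2) = ev R a b + (ev R b a + cntv R (alt a b k.+1))) //.
rewrite IH; apply/rowP => j; rewrite !mxE -!nat1r; ring.
Qed.

Lemma cntv_cons x a b k : cntv R (x :: alt a b k.+1) = ev R x a + cntv R (alt a b k.+1).
Proof. by []. Qed.

Definition pt (l : seq R) : 'rV[R]_6 := \row_k nth 0 l k.

Lemma path_alt a b k : a != b -> path neq3 b (alt a b k).
Proof.
move=> Hab; elim: k => //= k ->; by rewrite /neq3 (eq_sym b) Hab.
Qed.
Lemma PT_avec T (w : T.-tuple 'I_3) : Omega w -> PT T (avec R w).
Proof.
move=> Hw; exists (fun v => (v == w)%:R); split.
- by move=> v; rewrite ler0n.
- by move=> v Hv; case: eqP Hv => // ->; rewrite Hw.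
- by rewrite (bigD1 w) //= eqxx big1 ?addr0 // => v /negbTE ->.
by rewrite (bigD1 w) //= eqxx scale1r big1 ?addr0 // => v /negbTE ->; rewrite scale0r.
Qed.

Lemma PT_word T (s : seq 'I_3) (H : size s == T) x t : s = x :: t -> path neq3 x t ->
  PT T (cntv R s).
Proof.
move=> Es Hp; have -> : cntv R s = avec R (Tuple H) by rewrite avec_cntv.
apply: PT_avec; by rewrite (Omega_path (x := x) (t := t)).
Qed.

Definition sB m := alt L3 L1 m.+3.
Definition sC m := L2 :: L1 :: alt L3 L1 m.+2.
Definition sD m := L2 :: L3 :: alt L1 L3 m.+2.
Definition sE m := L3 :: L2 :: alt L3 L1 m.+2.
Definition sF m := L2 :: L3 :: L1 :: L2 :: alt L3 L1 m.+1.
Definition sG m := alt L1 L3 m.+3.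

Definition vB m := pt [:: 0; m.+2%:R; 0; 0; m.+3%:R; 0].
Definition vC m := pt [:: 0; m.+2%:R; 1; 0; m.+2%:R; 0].
Definition vD m := pt [:: 0; m.+2%:R; 0; 1; m.+2%:R; 0].
Definition vE m := pt [:: 0; m.+1%:R; 0; 1; m.+2%:R; 1].
Definition vF m := pt [:: 1; m%:R; 0; 2; m.+2%:R; 0].
Definition vG m := pt [:: 0; m.+3%:R; 0; 0; m.+2%:R; 0].


Lemma cB m : cntv R (sB m) = vB m.
Proof. rewrite /sB cntv_alt; apply/rowP => k; rewrite !mxE;
  case: k => [[|[|[|[|[|[|k]]]]]] Hk] //=; rewrite ?mxE /=; ring. Qed.
Lemma cC m : cntv R (sC m) = vC m.
Proof.
rewrite (_ : cntv R (sC m) = ev R L2 L1 + (ev R L1 L3 + cntv R (alt L3 L1 m.+2))) //.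
rewrite cntv_alt; apply/rowP => k; rewrite !mxE;
  case: k => [[|[|[|[|[|[|k]]]]]] Hk] //=; rewrite ?mxE /=; ring.
Qed.
Lemma cD m : cntv R (sD m) = vD m.
Proof.
rewrite (_ : cntv R (sD m) = ev R L2 L3 + (ev R L3 L1 + cntv R (alt L1 L3 m.+2))) //.
rewrite cntv_alt; apply/rowP => k; rewrite !mxE;
  case: k => [[|[|[|[|[|[|k]]]]]] Hk] //=; rewrite ?mxE /=; ring.
Qed.
Lemma cE m : cntv R (sE m) = vE m.
Proof.
rewrite (_ : cntv R (sE m) = ev R L3 L2 + (ev R L2 L3 + cntv R (alt L3 L1 m.+2))) //.
rewrite cntv_alt; apply/rowP => k; rewrite !mxE;
  case: k => [[|[|[|[|[|[|k]]]]]] Hk] //=; rewrite ?mxE /=; ring.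
Qed.
Lemma cF m : cntv R (sF m) = vF m.
Proof.
rewrite (_ : cntv R (sF m) = ev R L2 L3 + (ev R L3 L1 + (ev R L1 L2 + (ev R L2 L3 +
   cntv R (alt L3 L1 m.+1))))) //.
rewrite cntv_alt; apply/rowP => k; rewrite !mxE;
  case: k => [[|[|[|[|[|[|k]]]]]] Hk] //=; rewrite ?mxE /=; ring.
Qed.
Lemma cG m : cntv R (sG m) = vG m.
Proof. rewrite /sG cntv_alt; apply/rowP => k; rewrite !mxE;
  case: k => [[|[|[|[|[|[|k]]]]]] Hk] //=; rewrite ?mxE /=; ring. Qed.
Lemma PT_vs m : [/\ PT (m.+3 * 2) (vB m), PT (m.+3 * 2) (vC m), PT (m.+3 * 2) (vD m),
  PT (m.+3 * 2) (vE m) & PT (m.+3 * 2) (vF m)] /\ PT (m.+3 * 2) (vG m).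
Proof.
have Hs : forall a b k x y, size [:: x, y & alt a b k] = (k.+1 * 2)%N.
  by move=> a b k x y; rewrite /= size_alt; lia.
split; first split.
- rewrite -cB; apply: (@PT_word _ _ _ L3 (L1 :: alt L3 L1 m.+2)) => //.
    by rewrite /sB size_alt.
  by rewrite /= path_alt.
- rewrite -cC; apply: (@PT_word _ _ _ L2 (L1 :: alt L3 L1 m.+2)) => //.
    by rewrite /sC Hs.
  by rewrite /= path_alt.
- rewrite -cD; apply: (@PT_word _ _ _ L2 (L3 :: alt L1 L3 m.+2)) => //.
    by rewrite /sD Hs.
  by rewrite /= path_alt.
- rewrite -cE; apply: (@PT_word _ _ _ L3 (L2 :: alt L3 L1 m.+2)) => //.
    by rewrite /sE Hs.
  by rewrite /= path_alt.
- rewrite -cF; apply: (@PT_word _ _ _ L2 [:: L3, L1, L2 & alt L3 L1 m.+1]) => //.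
    by rewrite /sF /= size_alt; apply/eqP; lia.
  by rewrite /= path_alt.
rewrite -cG; apply: (@PT_word _ _ _ L1 (L3 :: alt L1 L3 m.+2)) => //.
  by rewrite /sG size_alt.
by rewrite /= path_alt.
Qed.

Lemma dot_vs m : let d := dotv (cvec R (m.+3 * 2)) in
  [/\ d (vB m) = 0, d (vC m) = 0, d (vD m) = 0, d (vE m) = 0 & d (vF m) = 0].
Proof.
split; rewrite /= dot_c /Wv /Sv big6 !mxE /= -!nat1r; ring.
Qed.
Definition mxl m n (l : seq (seq R)) : 'M[R]_(m, n) := \matrix_(i, j) nth 0 (nth [::] l i) j.

Definition E5 : 'M[R]_(6, 5) := mxl 6 5
  [:: [:: 0; -2; 0; 1; 2]; [:: 0; 0; 0; 0; 1]; [:: 1; 0; 0; 0; 0];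
      [:: 0; 1; 0; 0; 0]; [:: 0; 0; 0; 0; 0]; [:: 0; -1; 1; 0; 1]].

Definition E4 : 'M[R]_(6, 4) := mxl 6 4
  [:: [:: 0; -2; 0; 1]; [:: 0; 0; 0; 0]; [:: 1; 0; 0; 0];
      [:: 0; 1; 0; 0]; [:: 0; 0; 0; 0]; [:: 0; -1; 1; 0]].

Definition pP m (i : 'I_6) : 'rV[R]_6 := nth 0 [:: vB m; vC m; vD m; vE m; vF m; vG m] i.
Definition pF m (i : 'I_5) : 'rV[R]_6 := nth 0 [:: vB m; vC m; vD m; vE m; vF m] i.

Lemma indep_P m : affindep (pP m).
Proof.
apply/row_freeP; exists E5; apply/matrixP => i j; rewrite !mxE big6 !mxE.
case: i => [[|[|[|[|[|i]]]]] Hi] //; case: j => [[|[|[|[|[|j]]]]] Hj] //=;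
  rewrite !mxE /= -?nat1r; ring.
Qed.

Lemma indep_F m : affindep (pF m).
Proof.
apply/row_freeP; exists E4; apply/matrixP => i j; rewrite !mxE big6 !mxE.
case: i => [[|[|[|[|i]]]] Hi] //; case: j => [[|[|[|[|j]]]] Hj] //=;
  rewrite !mxE /= -?nat1r; ring.
Qed.
End Main.

Lemma facet_id (R : realFieldType) m : defines_facet (m.+3 * 2) (cvec R (m.+3 * 2)).
Proof.
split; first by move=> w Hw; apply: ineq_id.
have [[HB HC HD HE HF] HG] := PT_vs R m.
have [DB DC DD DE DF] := dot_vs R m.
exists 4%N; split; split.
- exists (pP R m); split; last exact: indep_P.
  by case=> [[|[|[|[|[|[|i]]]]]] Hi].
- exact: not_PT6.
- exists (pF R m); split; last exact: indep_F.
  by case=> [[|[|[|[|[|i]]]]] Hi].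
exact: not_face5.
Qed.

Unset Implicit Arguments.
Set Strict Implicit.

Theorem proposition10 (R : realFieldType) (T : nat) (s : {perm 'I_3}) :
  (6 <= T)%N -> ~~ odd T -> defines_facet T (sact s (cvec R T)).
Proof.
move=> H6 Hodd; apply: transfer.
have H := odd_double_half T; rewrite (negbTE Hodd) add0n -muln2 in H.
have -> : T = ((T./2 - 3).+3 * 2)%N by lia.
exact: facet_id.
Qed.
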